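(* For a complete residuated lattice $L=(L,* )$ the following are equivalent: (i) $L$ satisfies the law of double negation, i.e. $(a\to0)\to0=a$ for all $a\in L$; (ii) for every $L$-context $(X,Y,\phi)$ and all $X'\subseteq X$, $Y'\subseteq Y$: $(X',Y',(\neg\phi)_{X',Y'})$ is a reduct of $(X,Y,\neg\phi)$ in RST if and only if $(X',Y',\phi_{X',Y'})$ is a reduct of $(X,Y,\phi)$ in FCA; (iii) for every $L$-context $(X,Y,\phi)$ and all $X'\subseteq X$, $Y'\subseteq Y$: if $(X',Y',(\neg\phi)_{X',Y'})$ is a reduct of $(X,Y,\neg\phi)$ in RST, then $(X',Y',\phi_{X',Y'})$ is a reduct of $(X,Y,\phi)$ in FCA.
   Context: $L=(L,* )$ is a complete residuated lattice: a complete lattice with bottom $0$ and top $1$, with a commutative associative operation $*$ with unit $1$ satisfying $a*\bigvee_i b_i=\bigvee_i a*b_i$; $\to$ is its residuum ($a*b\le c\iff a\le b\to c$); $\neg a=a\to 0$. An $L$-context is $(X,Y,\phi)$ with $X,Y$ sets and $\phi\colon X\times Y\to L$; $(\neg\phi)(x,y)=\neg\phi(x,y)$. $L^X$ is the set of maps $X\to L$ with $L$-order $L^X(\mu,\mu')=\bigwedge_x(\mu(x)\to\mu'(x))$. For $\mu\in L^X$, $\lambda\in L^Y$: $(\phi^\uparrow\mu)(y)=\bigwedge_{x}(\mu(x)\to\phi(x,y))$, $(\phi^\downarrow\lambda)(x)=\bigwedge_{y}(\lambda(y)\to\phi(x,y))$, $(\phi^\exists\mu)(y)=\bigvee_x\mu(x)*\phi(x,y)$,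 $(\phi^\forall\lambda)(x)=\bigwedge_y(\phi(x,y)\to\lambda(y))$. $\mathcal{M}\phi=\{\mu\in L^X\mid\phi^\downarrow\phi^\uparrow\mu=\mu\}$, $\mathcal{K}\phi=\{\mu\in L^X\mid\phi^\forall\phi^\exists\mu=\mu\}$, both with the $L$-order inherited from $L^X$. For $X'\subseteq X$, $Y'\subseteq Y$: $\phi_{X',Y'}$ is the restriction of $\phi$ to $X'\times Y'$; $\mu_{X'}$ the restriction of $\mu\in L^X$; $\underline{\mu'}\in L^X$ the extension of $\mu'\in L^{X'}$ by $0$. An isomorphism of complete $L$-lattices is an $L$-isometric bijection ($P(p,p')=Q(fp,fp')$). Reduct in FCA: $(X',Y',\phi_{X',Y'})$ is a reduct of $(X,Y,\phi)$ in FCA if the map $E_1\colon\mathcal{M}\phi_{X',Y'}\to\mathcal{M}\phi$, $\mu'\mapsto\phi^\downarrow\phi^\uparrow\underline{\mu'}$, is an isomorphism of complete $L$-lattices (it is known that this is equivalent to each of $R_1\mu=(\phi_{X',Y'})^\downarrow(\phi_{X',Y'})^\uparrow\mu_{X'}$, $R_2\mu=((\phi_{X,Y'})^\downarrow(\phi_{X,Y'})^\uparrow\mu)_{X'}$, $E_2\mu'=(\phi_{X,Y'})^\downarrow(\phi_{X,Y'})^\uparrow\underline{\mu'}$ being an isomorphism, and to: for every $\mu\in L^X$ there is $\mu'\in L^{X'}$ with $\phi^\uparrow\mu=(\phi_{X',Y})^\uparrow\mu'$, and for every $\lambda\in L^Y$ there is $\lambda'\in L^{Y'}$ with $\phi^\downarrow\lambda=(\phi_{X,Y'})^\downarrow\lambda'$).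 Reduct in RST: $(X',Y',\psi_{X',Y'})$ is a reduct of $(X,Y,\psi)$ in RST if the map $F_1\colon\mathcal{K}\psi_{X',Y'}\to\mathcal{K}\psi$, $\mu'\mapsto\psi^\forall\psi^\exists\underline{\mu'}$, is an isomorphism of complete $L$-lattices (equivalently, any one of $S_1\mu=(\psi_{X',Y'})^\forall(\psi_{X',Y'})^\exists\mu_{X'}$, $S_2\mu=((\psi_{X,Y'})^\forall(\psi_{X,Y'})^\exists\mu)_{X'}$, $F_2\mu'=(\psi_{X,Y'})^\forall(\psi_{X,Y'})^\exists\underline{\mu'}$ is an isomorphism). *)

(* Defs.v *)
From Stdlib Require Import Classical ClassicalEpsilon.



Record CRL := {
  car :> Type;
  le : car -> car -> Prop;
  le_refl : forall a, le a a;
  le_antisym : forall a b, le a b -> le b a -> a = b;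
  le_trans : forall a b c, le a b -> le b c -> le a c;
  sup : (car -> Prop) -> car;
  sup_ub : forall (S : car -> Prop) a, S a -> le a (sup S);
  sup_least : forall (S : car -> Prop) b, (forall a, S a -> le a b) -> le (sup S) b;
  mul : car -> car -> car;
  one : car;
  mul_assoc : forall a b c, mul a (mul b c) = mul (mul a b) c;
  mul_comm : forall a b, mul a b = mul b a;
  mul_one : forall a, mul a one = a;
  one_top : forall a, le a one;
  res : car -> car -> car;
  res_adj : forall a b c, le (mul a b) c <-> le a (res b c)
}.

Section Ops.
Variable L : CRL.

Definition inf (S : L -> Prop) : L := sup L (fun l => forall s, S s -> le L l s).
Definition zero : L := sup L (fun _ => False).
Definition neg (a : L) : L := res L a zero.
Definition bigsup {I : Type} (f : I -> L) : L := sup L (fun l => exists i, l = f i).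
Definition biginf {I : Type} (f : I -> L) : L := inf (fun l => exists i, l = f i).

Definition Lord {X : Type} (m m' : X -> L) : L := biginf (fun x => res L (m x) (m' x)).

Definition up {X Y : Type} (phi : X -> Y -> L) (m : X -> L) : Y -> L :=
  fun y => biginf (fun x => res L (m x) (phi x y)).
Definition down {X Y : Type} (phi : X -> Y -> L) (l : Y -> L) : X -> L :=
  fun x => biginf (fun y => res L (l y) (phi x y)).
Definition exi {X Y : Type} (phi : X -> Y -> L) (m : X -> L) : Y -> L :=
  fun y => bigsup (fun x => mul L (m x) (phi x y)).
Definition all {X Y : Type} (phi : X -> Y -> L) (l : Y -> L) : X -> L :=
  fun x => biginf (fun y => res L (phi x y) (l y)).

Definition Mset {X Y : Type} (phi : X -> Y -> L) (m : X -> L) : Prop :=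
  forall x, down phi (up phi m) x = m x.
Definition Kset {X Y : Type} (phi : X -> Y -> L) (m : X -> L) : Prop :=
  forall x, all phi (exi phi m) x = m x.

Definition negctx {X Y : Type} (phi : X -> Y -> L) : X -> Y -> L :=
  fun x y => neg (phi x y).

Definition restr {X Y : Type} (X' : X -> Prop) (Y' : Y -> Prop) (phi : X -> Y -> L)
  : sig X' -> sig Y' -> L :=
  fun x y => phi (proj1_sig x) (proj1_sig y).

Definition ext0 {X : Type} (X' : X -> Prop) (m : sig X' -> L) : X -> L :=
  fun x => match excluded_middle_informative (X' x) with
           | left h => m (exist X' x h)
           | right _ => zero
           end.

(* f is an isomorphism of complete L-lattices from P (subset of L^A) onto
   Q (subset of L^B): an L-isometric bijection. *)
Definition Liso {A B : Type} (P : (A -> L) -> Prop) (Q : (B -> L) -> Prop)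
  (f : (A -> L) -> (B -> L)) : Prop :=
  (forall m, P m -> Q (f m)) /\
  (forall m m', P m -> P m' -> (forall b, f m b = f m' b) -> forall a, m a = m' a) /\
  (forall n, Q n -> exists m, P m /\ forall b, f m b = n b) /\
  (forall m m', P m -> P m' -> Lord m m' = Lord (f m) (f m')).

Definition FCA_reduct {X Y : Type} (phi : X -> Y -> L) (X' : X -> Prop) (Y' : Y -> Prop)
  : Prop :=
  Liso (Mset (restr X' Y' phi)) (Mset phi)
       (fun m' => down phi (up phi (ext0 X' m'))).

Definition RST_reduct {X Y : Type} (psi : X -> Y -> L) (X' : X -> Prop) (Y' : Y -> Prop)
  : Prop :=
  Liso (Kset (restr X' Y' psi)) (Kset psi)
       (fun m' => all psi (exi psi (ext0 X' m'))).

End Ops.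

(* Main.v *)
Require Import Defs.
From Stdlib Require Import Setoid Classical ClassicalEpsilon FunctionalExtensionality PropExtensionality.

Section Aux.
Variable L : CRL.

Lemma yoneda (u v : L) : (forall x, le L x u <-> le L x v) -> u = v.
Proof. intro H. apply le_antisym; [apply H | apply H]; apply le_refl. Qed.

Lemma inf_lb (S : L -> Prop) s : S s -> le L (inf L S) s.
Proof. intro Hs. unfold inf. apply sup_least. intros l Hl. apply Hl, Hs. Qed.
Lemma inf_glb (S : L -> Prop) b : (forall s, S s -> le L b s) -> le L b (inf L S).
Proof. intro H. unfold inf. apply sup_ub. exact H. Qed.
Lemma biginf_lb {I} (f : I -> L) i : le L (biginf L f) (f i).
Proof. apply inf_lb. exists i; reflexivity. Qed.
Lemma biginf_glb {I} (f : I -> L) b : (forall i, le L b (f i)) -> le L b (biginf L f).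
Proof. intro H. apply inf_glb. intros s [i ->]. apply H. Qed.
Lemma bigsup_ub {I} (f : I -> L) i : le L (f i) (bigsup L f).
Proof. apply sup_ub. exists i; reflexivity. Qed.
Lemma bigsup_least {I} (f : I -> L) b : (forall i, le L (f i) b) -> le L (bigsup L f) b.
Proof. intro H. apply sup_least. intros a [i ->]. apply H. Qed.

Lemma mul_res_le a b : le L (mul L a (res L a b)) b.
Proof. rewrite mul_comm. apply res_adj. apply le_refl. Qed.
Lemma mul_mono_l a b c : le L a b -> le L (mul L a c) (mul L b c).
Proof. intro H. apply res_adj. eapply le_trans; [exact H|]. apply res_adj, le_refl. Qed.
Lemma mul_mono_r a b c : le L a b -> le L (mul L c a) (mul L c b).
Proof. intro H. rewrite !(mul_comm L c). apply mul_mono_l, H. Qed.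
Lemma mul_one_l a : mul L (one L) a = a.
Proof. rewrite mul_comm. apply mul_one. Qed.
Lemma mul_le_r a b : le L (mul L a b) b.
Proof. eapply le_trans; [apply mul_mono_l, one_top|]. rewrite mul_one_l. apply le_refl. Qed.
Lemma mul_le_l a b : le L (mul L a b) a.
Proof. rewrite mul_comm. apply mul_le_r. Qed.
Lemma le_res a b : le L b (res L a b).
Proof. apply res_adj. rewrite mul_comm. apply mul_le_r. Qed.
Lemma res_anti_l a b c : le L a b -> le L (res L b c) (res L a c).
Proof. intro H. apply res_adj. eapply le_trans; [apply mul_mono_r, H|].
  rewrite mul_comm. apply mul_res_le. Qed.
Lemma res_one_l b : res L (one L) b = b.
Proof. apply le_antisym.
  - pose proof (proj2 (res_adj L (res L (one L) b) (one L) b) (le_refl _ _)) as H.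
    rewrite mul_one in H. exact H.
  - apply res_adj. rewrite mul_one. apply le_refl. Qed.
Lemma res_curry a b c : res L (mul L a b) c = res L a (res L b c).
Proof. apply yoneda. intro x. rewrite <- !res_adj. rewrite mul_assoc. tauto. Qed.
Lemma res_neg b c : res L b (neg L c) = neg L (mul L b c).
Proof. unfold neg. symmetry. apply res_curry. Qed.
Lemma neg_le_neg a b : le L a b -> le L (neg L b) (neg L a).
Proof. intro H. unfold neg. apply res_anti_l, H. Qed.
Lemma dn_le a : le L a (neg L (neg L a)).
Proof. unfold neg. apply res_adj. apply mul_res_le. Qed.
Lemma neg3 a : neg L (neg L (neg L a)) = neg L a.
Proof. apply le_antisym. apply neg_le_neg, dn_le. apply dn_le. Qed.

Lemma neg_bigsup {I} (f : I -> L) : neg L (bigsup L f) = biginf L (fun i => neg L (f i)).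
Proof.
  apply le_antisym.
  - apply biginf_glb. intro i. apply neg_le_neg. apply bigsup_ub.
  - unfold neg. apply res_adj. rewrite mul_comm. apply res_adj.
    apply bigsup_least. intro i. apply res_adj. rewrite mul_comm. apply res_adj.
    apply (biginf_lb (fun i => res L (f i) (zero L)) i).
Qed.

Section DN.
Variable DN : forall a : L, neg L (neg L a) = a.

Lemma mul_neg b c : mul L b (neg L c) = neg L (res L b c).
Proof. rewrite <- (DN c) at 2. rewrite res_neg, DN. reflexivity. Qed.
Lemma res_swap p q : res L (neg L p) q = res L (neg L q) p.
Proof. rewrite <- (DN q) at 1. rewrite <- (DN p) at 2. rewrite !res_neg, mul_comm. reflexivity. Qed.

Lemma key {X Y} (phi : X -> Y -> L) (m : X -> L) :
  all L (negctx L phi) (exi L (negctx L phi) m) = down L phi (up L phi m).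
Proof.
  extensionality x. unfold all, exi, down, up, negctx.
  f_equal. extensionality y.
  rewrite res_swap. f_equal.
  replace (fun x0 => mul L (m x0) (neg L (phi x0 y))) with (fun x0 => neg L (res L (m x0) (phi x0 y)))
    by (extensionality x0; symmetry; apply mul_neg).
  rewrite neg_bigsup. f_equal. extensionality x0. apply DN.
Qed.

Lemma RST_FCA {X Y} (phi : X -> Y -> L) X' Y' :
  RST_reduct L (negctx L phi) X' Y' <-> FCA_reduct L phi X' Y'.
Proof.
  unfold RST_reduct, FCA_reduct.
  change (restr L X' Y' (negctx L phi)) with (negctx L (restr L X' Y' phi)).
  assert (HK : forall A B (psi : A -> B -> L), Kset L (negctx L psi) = Mset L psi).
  { intros. extensionality m. apply propositional_extensionality. unfold Kset, Mset.
    rewrite key. tauto. }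
  rewrite !HK.
  assert (HF : (fun m' => all L (negctx L phi) (exi L (negctx L phi) (ext0 L X' m')))
             = (fun m' => down L phi (up L phi (ext0 L X' m')))).
  { extensionality m'. apply key. }
  rewrite HF. tauto.
Qed.
End DN.
End Aux.

Section Cex.
Variable L : CRL.

Lemma biginf_const {I} (f : I -> L) v (i0 : I) : (forall i, f i = v) -> biginf L f = v.
Proof. intro H. apply le_antisym.
  - rewrite <- (H i0). apply biginf_lb.
  - apply biginf_glb. intro i. rewrite H. apply le_refl. Qed.
Lemma bigsup_single {I} (f : I -> L) (i0 : I) : (forall i, i = i0) -> bigsup L f = f i0.
Proof. intro H. apply le_antisym.
  - apply bigsup_least. intro i. rewrite (H i). apply le_refl.
  - apply bigsup_ub. Qed.

Definition G (n u : L) := res L n (mul L u n).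

Lemma allexi_const {A B} (psi : A -> B -> L) (n : L) (a0 : A) (b0 : B)
  (Hpsi : forall x y, psi x y = n) (Ha : forall x, x = a0) (m : A -> L) x :
  all L psi (exi L psi m) x = G n (m a0).
Proof.
  unfold all. apply (biginf_const _ _ b0). intro y. cbv beta. rewrite Hpsi. unfold G. f_equal.
  unfold exi. rewrite (bigsup_single _ a0 Ha). cbv beta. rewrite Hpsi. reflexivity.
Qed.

Definition cphi (a : L) : unit -> bool -> L :=
  fun _ y => if y then a else neg L (neg L a).
Definition cX : unit -> Prop := fun _ => True.
Definition cY : bool -> Prop := fun y => y = false.
Definition pt : sig cX := exist cX tt I.

Lemma ext0_pt (m : sig cX -> L) : ext0 L cX m tt = m pt.
Proof. unfold ext0. destruct (excluded_middle_informative (cX tt)) as [h|h].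
  - destruct h. reflexivity.
  - exfalso. apply h. exact I. Qed.

Lemma cX_single (x : sig cX) : x = pt.
Proof. destruct x as [[] h]. destruct h. reflexivity. Qed.

Lemma cex_RST a : RST_reduct L (negctx L (cphi a)) cX cY.
Proof.
  set (n := neg L a).
  assert (Hpsi : forall x y, negctx L (cphi a) x y = n).
  { intros x [|]; unfold negctx, cphi; [reflexivity | apply neg3]. }
  assert (HpsiR : forall x y, restr L cX cY (negctx L (cphi a)) x y = n).
  { intros. unfold restr. apply Hpsi. }
  assert (HK : forall (mu : unit -> L) x,
      all L (negctx L (cphi a)) (exi L (negctx L (cphi a)) mu) x = G n (mu tt)).
  { intros. apply (allexi_const _ n tt true Hpsi). intros []; reflexivity. }
  assert (HKR : forall (m : sig cX -> L) x,
      all L (restr L cX cY (negctx L (cphi a))) (exi L (restr L cX cY (negctx L (cphi a))) m) x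
      = G n (m pt)).
  { intros. apply (allexi_const _ n pt (exist cY false eq_refl) HpsiR). apply cX_single. }
  assert (HF : forall (m : sig cX -> L) x,
      all L (negctx L (cphi a)) (exi L (negctx L (cphi a)) (ext0 L cX m)) x = G n (m pt)).
  { intros. rewrite HK. rewrite ext0_pt. reflexivity. }
  unfold RST_reduct, Liso, Kset. split; [|split; [|split]].
  - intros m Hm x. specialize (Hm pt). rewrite HKR in Hm. cbv beta.
    rewrite HK, !HF. rewrite !Hm. reflexivity.
  - intros m m' Hm Hm' Heq x. specialize (Heq tt). rewrite !HF in Heq.
    specialize (Hm pt). specialize (Hm' pt). rewrite HKR in Hm, Hm'.
    rewrite (cX_single x). congruence.
  - intros nn Hn. exists (fun _ => nn tt). split.
    + intro x. rewrite HKR. specialize (Hn tt). rewrite HK in Hn. exact Hn.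
    + intro b. rewrite HF. destruct b. specialize (Hn tt). rewrite HK in Hn. exact Hn.
  - intros m m' Hm Hm'. specialize (Hm pt). specialize (Hm' pt). rewrite HKR in Hm, Hm'.
    unfold Lord.
    rewrite (biginf_const _ (res L (m pt) (m' pt)) pt).
    + symmetry. apply (biginf_const _ _ tt). intro i. rewrite !HF. rewrite Hm, Hm'. reflexivity.
    + intro i. rewrite (cX_single i). reflexivity.
Qed.

Lemma iii_i (H : forall (X Y : Type) (phi : X -> Y -> L) (X' : X -> Prop) (Y' : Y -> Prop),
      RST_reduct L (negctx L phi) X' Y' -> FCA_reduct L phi X' Y') :
  forall a : L, neg L (neg L a) = a.
Proof.
  intro a. apply le_antisym; [|apply dn_le].
  destruct (H unit bool (cphi a) cX cY (cex_RST a)) as [_ [_ [Hs _]]].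
  destruct (Hs (fun _ => a)) as [m [Hm Heq]].
  { intro x. unfold down. apply le_antisym.
    - eapply le_trans; [apply (biginf_lb L _ true)|]. cbv beta. unfold cphi.
      eapply le_trans; [apply res_anti_l|]. 2: rewrite res_one_l; apply le_refl.
      unfold up. apply biginf_glb. intro. cbv beta. unfold cphi.
      apply res_adj. rewrite mul_one_l. apply le_refl.
    - apply biginf_glb. intro y. apply res_adj. eapply le_trans; [apply mul_le_l|].
      destruct y; unfold cphi; [apply le_refl | apply dn_le]. }
  set (c := m pt).
  assert (H1 : le L (neg L (neg L a)) c).
  { unfold c. rewrite <- (Hm pt). unfold down. apply biginf_glb. intro y.
    assert (Hy : proj1_sig y = false) by (destruct y; assumption).
    unfold restr. rewrite Hy. unfold cphi. apply le_res. }
  assert (H2 : le L c a).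
  { pose proof (Heq tt) as Ha. cbv beta in Ha. rewrite <- Ha. unfold down.
    apply biginf_glb. intro y. apply res_adj.
    eapply le_trans; [apply mul_mono_r; apply (biginf_lb L _ tt)|]. cbv beta.
    rewrite ext0_pt. apply mul_res_le. }
  eapply le_trans; eassumption.
Qed.
End Cex.

Theorem mainTheorem8 (L : CRL) :
  ((forall a : L, neg L (neg L a) = a) <->
   (forall (X Y : Type) (phi : X -> Y -> L) (X' : X -> Prop) (Y' : Y -> Prop),
      RST_reduct L (negctx L phi) X' Y' <-> FCA_reduct L phi X' Y')) /\
  ((forall a : L, neg L (neg L a) = a) <->
   (forall (X Y : Type) (phi : X -> Y -> L) (X' : X -> Prop) (Y' : Y -> Prop),
      RST_reduct L (negctx L phi) X' Y' -> FCA_reduct L phi X' Y')).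
Proof.
  split; split.
  - intros DN X Y phi X' Y'. apply RST_FCA. exact DN.
  - intro H. apply iii_i. intros X Y phi X' Y'. apply H.
  - intros DN X Y phi X' Y'. apply RST_FCA. exact DN.
  - apply iii_i.
Qed.
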